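(* If $T$ is a subcubic tree, then $\gamma_e(T)\le 2\gamma_{e,f}^*(T)$.
   Context: All graphs are finite, simple and undirected; subcubic means maximum degree at most $3$. For a graph $G$ and $D\subseteq V(G)$, and vertices $u,v$, let $\mathrm{dist}_{(G,D)}(u,v)$ be the minimum number of edges of a path $P$ in $G$ between $u$ and $v$ such that $D$ contains exactly one endvertex of $P$ and no internal vertex of $P$ ($\infty$ if no such path exists; in particular $\mathrm{dist}_{(G,D)}(u,u)=0$ for $u\in D$). Let $w_{(G,D)}(u)=\sum_{v\in D}\left(\frac12\right)^{\mathrm{dist}_{(G,D)}(u,v)-1}$ with $\left(\frac12\right)^\infty=0$. $D$ is an exponential dominating set if $w_{(G,D)}(u)\ge 1$ for every $u\in V(G)$, and $\gamma_e(G)$ is the minimum size of an exponential dominating set. The fractional porous exponential domination number $\gamma_{e,f}^*(G)$ is the optimum value of the linear program: minimize $\sum_{u\in V(G)}x(u)$ subject to $\sum_{u\in V(G)}\left(\frac12\right)^{\mathrm{dist}_G(u,v)-1}x(u)\ge 1$ for every $v\in V(G)$ and $x\ge 0$, where $\mathrm{dist}_G$ is the usual distance. *)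

(* Defs.v *)
From HB Require Import structures.
From mathcomp Require Import all_boot all_order all_algebra.
Set Implicit Arguments. Unset Strict Implicit. Unset Printing Implicit Defensive.
Import Order.TTheory GRing.Theory Num.Theory.

Definition simple_graph (T : finType) (e : rel T) : Prop :=
  symmetric e /\ irreflexive e.

Definition subcubic (T : finType) (e : rel T) : Prop :=
  forall x : T, #|[set y | e x y]| <= 3.

(* tree: nonempty, connected, and #edges = #vertices - 1
   (ordered pairs counted, hence the factor 2). *)
Definition is_tree (T : finType) (e : rel T) : Prop :=
  [/\ 0 < #|T|, (forall x y : T, connect e x y)
    & #|[set p : T * T | e p.1 p.2]| = 2 * (#|T| - 1)].

Definition walk_len (T : finType) (e : rel T) (u v : T) (k : nat) : bool :=
  [exists p : k.-tuple T, path e u p && (last u p == v)].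

(* usual distance dist_G(u,v); None = infinity.
   A shortest walk is a path and has fewer than #|T| edges. *)
Definition gdist (T : finType) (e : rel T) (u v : T) : option nat :=
  let k := find (walk_len e u v) (iota 0 #|T|) in
  if k < #|T| then Some k else None.

(* There is a path P = u x1 ... xk (xk = v) with exactly k edges such that
   D contains exactly one endvertex of P and no internal vertex of P. *)
Definition Dpath_len (T : finType) (e : rel T) (D : {set T}) (u v : T)
    (k : nat) : bool :=
  [exists p : k.-tuple T,
    [&& path e u p, last u p == v, uniq (u :: p),
        all (fun x => x \notin D) (take k.-1 p)
      & (if u == v then u \in D else (u \in D) != (v \in D))]].

(* dist_(G,D)(u,v); None = infinity (simple paths have < #|T| edges). *)
Definition distD (T : finType) (e : rel T) (D : {set T}) (u v : T)
    : option nat :=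
  let k := find (Dpath_len e D u v) (iota 0 #|T|) in
  if k < #|T| then Some k else None.

(* (1/2)^(d-1) = 2 / 2^d, and (1/2)^infinity = 0 *)
Definition half_pow (R : numFieldType) (d : option nat) : R :=
  match d with
  | Some k => (2%:R / (2%:R ^+ k))%R
  | None => 0%R
  end.

Definition exp_weight (T : finType) (e : rel T) (D : {set T}) (u : T) : rat :=
  (\sum_(v in D) half_pow rat (distD e D u v))%R.

Definition exp_dominating (T : finType) (e : rel T) (D : {set T}) : bool :=
  [forall u : T, (1 <= exp_weight e D u)%R].

(* gamma_e(G): minimum size of an exponential dominating set
   ([set: T] is always one). *)
Definition gamma_e (T : finType) (e : rel T) : nat :=
  #|[arg min_(D < [set: T] | exp_dominating e D) #|D|]|.

Definition porous_frac_feasible (R : realFieldType) (T : finType) (e : rel T)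
    (x : T -> R) : Prop :=
  (forall u, (0 <= x u)%R) /\
  (forall v, (1 <= \sum_(u : T) half_pow R (gdist e u v) * x u)%R).

(* Main.v *)
Require Import Defs.
From HB Require Import structures.
From mathcomp Require Import all_boot all_order all_algebra.
From mathcomp Require Import zify ring lra.
From Stdlib Require Import FunctionalExtensionality.
Import Order.TTheory GRing.Theory Num.Theory.
Set Implicit Arguments. Unset Strict Implicit. Unset Printing Implicit Defensive.

Section Generic.
Variables (T : finType) (e : rel T).

Lemma walk_lenP u v k :
  reflect (exists p : seq T, [/\ size p = k, path e u p & last u p = v])
          (walk_len e u v k).
Proof.
apply: (iffP existsP) => [[p /andP[Hp /eqP Hl]]|[p [Hs Hp Hl]]].
  by exists (val p); rewrite size_tuple.
have Hs' : size p == k by rewrite Hs.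
by exists (Tuple Hs'); rewrite /= Hp Hl eqxx.
Qed.

Lemma find_iota_eq (P : pred nat) n k :
  k < n -> P k -> (forall j, j < k -> ~~ P j) -> find P (iota 0 n) = k.
Proof.
move=> kn Pk Hj.
have hP : has P (iota 0 n) by apply/hasP; exists k => //; rewrite mem_iota.
have fn : find P (iota 0 n) < n by rewrite -{2}(size_iota 0 n) -has_find.
have := nth_find 0 hP; rewrite nth_iota // add0n => Pf.
case: (ltngtP (find P (iota 0 n)) k) => // H.
- by move: (Hj _ H); rewrite Pf.
- by move: (before_find 0 H); rewrite nth_iota // add0n Pk.
Qed.

Lemma find_iota_le (P : pred nat) n k :
  k < n -> P k -> find P (iota 0 n) <= k.
Proof.
move=> kn Pk; rewrite leqNgt; apply/negP => H.
by move: (before_find 0 H); rewrite nth_iota // add0n Pk.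
Qed.

Lemma gdistE u v k : walk_len e u v k -> (forall j, j < k -> ~~ walk_len e u v j) ->
  k < #|T| -> gdist e u v = Some k.
Proof. by move=> Wk Hj kn; rewrite /gdist (find_iota_eq kn Wk Hj) kn. Qed.

Definition Dcond (D : {set T}) u v p :=
  [&& path e u p, last u p == v, uniq (u :: p),
      all (fun x => x \notin D) (take (size p).-1 p)
    & (if u == v then u \in D else (u \in D) != (v \in D))].

Lemma DpathP D u v k :
  reflect (exists p : seq T, size p = k /\ Dcond D u v p) (Dpath_len e D u v k).
Proof.
apply: (iffP existsP) => [[p Hp]|[p [Hs Hp]]].
  by exists (val p); rewrite size_tuple; split => //; rewrite /Dcond size_tuple.
have Hs' : size p == k by rewrite Hs.
by exists (Tuple Hs'); move: Hp; rewrite /Dcond /= Hs.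
Qed.

Lemma Dpath_lt D u v k : Dpath_len e D u v k -> k < #|T|.
Proof.
case/DpathP => p [<- /and5P[_ _ Hu _ _]].
have := max_card (mem (u :: p)); rewrite (card_uniqP Hu) /=; lia.
Qed.

Lemma distD_le D u v k : Dpath_len e D u v k ->
  exists2 k', k' <= k & distD e D u v = Some k'.
Proof.
move=> H; have kn := Dpath_lt H.
have fk := find_iota_le kn H.
exists (find (Dpath_len e D u v) (iota 0 #|T|)) => //.
by rewrite /distD (leq_ltn_trans fk kn).
Qed.

End Generic.

Section HalfPow.
Variable R : numFieldType.
Local Open Scope ring_scope.

Lemma hp_Some k : half_pow R (Some k) = 2%:R / (2%:R ^+ k).
Proof. by []. Qed.

Lemma hp_ge0 d : 0 <= half_pow R d.
Proof. by case: d => [k|] //=; rewrite divr_ge0 // exprn_ge0. Qed.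

Lemma hp_le k k' : (k' <= k)%N -> half_pow R (Some k) <= half_pow R (Some k').
Proof.
move=> H; rewrite /= ler_pdivrMr ?exprn_gt0 // mulrC mulrA.
rewrite ler_pdivlMr ?exprn_gt0 //.
by rewrite mulrC ler_pM2l // ler_eXn2l // ltr1n.
Qed.

Lemma hp_S k : half_pow R (Some k.+1) = half_pow R (Some k) / 2%:R.
Proof. by rewrite /= exprS invfM mulrA mulrAC. Qed.

End HalfPow.


Section Tree.
Variables (T : finType) (e : rel T).
Hypothesis Hsym : symmetric e.
Hypothesis Hconn : forall x y : T, connect e x y.
Hypothesis Hcard : #|[set p : T * T | e p.1 p.2]| = 2 * (#|T| - 1).
Variable u : T.

Lemma walk_ex v : exists k, walk_len e u v k.
Proof.
case/connectP: (Hconn u v) => p Hp Hl; exists (size p); apply/walk_lenP; by exists p.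
Qed.

Definition dist v := ex_minn (walk_ex v).

Lemma dist_walk v : walk_len e u v (dist v).
Proof. by rewrite /dist; case: ex_minnP. Qed.

Lemma dist_min v k : walk_len e u v k -> dist v <= k.
Proof. rewrite /dist; case: ex_minnP => m _ H /H //. Qed.

Lemma dist_lt v : dist v < #|T|.
Proof.
case/connectP: (Hconn u v) => p Hp ->.
case: (shortenP Hp) => p' Hp' Hu _.
have W : walk_len e u (last u p') (size p') by apply/walk_lenP; exists p'.
apply: leq_ltn_trans (dist_min W) _.
have := max_card (mem (u :: p')); rewrite (card_uniqP Hu) /=; lia.
Qed.

Lemma gdist_dist v : gdist e u v = Some (dist v).
Proof.
apply: gdistE (dist_walk v) _ (dist_lt v) => j Hj; apply/negP => /dist_min; lia.
Qed.

Lemma dist_root : dist u = 0.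
Proof. apply/eqP; rewrite -leqn0; apply: dist_min; apply/walk_lenP; by exists [::]. Qed.

Lemma walk0 v : walk_len e u v 0 -> v = u.
Proof. by case/walk_lenP => p [/size0nil -> _ /= ->]. Qed.

Lemma dist0 v : dist v = 0 -> v = u.
Proof. by move=> H; have := dist_walk v; rewrite H => /walk0. Qed.

Lemma dist_edge a b : e a b -> dist b <= (dist a).+1.
Proof.
move=> Hab; apply: dist_min; case/walk_lenP: (dist_walk a) => p [Hs Hp Hl].
apply/walk_lenP; exists (rcons p b); split.
- by rewrite size_rcons Hs.
- by rewrite rcons_path Hp Hl Hab.
- by rewrite last_rcons.
Qed.

Lemma dist_pred v : v != u -> exists a, e a v && ((dist a).+1 == dist v).
Proof.
move=> Hv; case/walk_lenP: (dist_walk v) => p [Hs Hp Hl].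
case/lastP: p Hs Hp Hl => [|p b] Hs Hp Hl.
  by move: Hl Hv => /= ->; rewrite eqxx.
rewrite last_rcons in Hl; subst b.
move: Hp; rewrite rcons_path => /andP[Hp He].
exists (last u p); rewrite He /=.
have W : walk_len e u (last u p) (size p) by apply/walk_lenP; exists p.
have h1 := dist_min W; have h2 := dist_edge He; rewrite size_rcons in Hs.
apply/eqP; lia.
Qed.

Definition par v := if v == u then u else
  odflt u [pick a | e a v && ((dist a).+1 == dist v)].

Lemma par_root : par u = u. Proof. by rewrite /par eqxx. Qed.

Lemma par_spec v : v != u -> e (par v) v /\ (dist (par v)).+1 = dist v.
Proof.
move=> Hv; rewrite /par (negbTE Hv); case: pickP => [a /andP[H1 /eqP H2]|H] //=.
case: (dist_pred Hv) => a Ha; by move: (H a); rewrite Ha.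
Qed.

Lemma tree_edge a b : e a b -> (a != u) && (b == par a) || (b != u) && (a == par b).
Proof.
move=> Hab.
pose P1 := [set p : T * T | (p.1 != u) && (p.2 == par p.1)].
pose P2 := [set p : T * T | (p.2 != u) && (p.1 == par p.2)].
pose E := [set p : T * T | e p.1 p.2].
have sub : P1 :|: P2 \subset E.
  apply/subsetP => [[x y]]; rewrite !inE /= => /orP[/andP[Hx /eqP ->]|/andP[Hy /eqP ->]].
  - by rewrite Hsym; case: (par_spec Hx).
  - by case: (par_spec Hy).
have c1 : #|P1| = #|T| - 1.
  have -> : P1 = [set (v, par v) | v in [set~ u]].
    apply/setP => [[x y]]; rewrite !inE /=; apply/idP/imsetP.
    - by case/andP => Hx /eqP ->; exists x; rewrite ?inE.
    - by case=> v; rewrite !inE => Hv [-> ->]; rewrite Hv eqxx.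
  rewrite card_imset ?cardsC1 ?subn1 //; by move=> v w [].

have c2 : #|P2| = #|T| - 1.
  have -> : P2 = [set (par v, v) | v in [set~ u]].
    apply/setP => [[x y]]; rewrite !inE /=; apply/idP/imsetP.
    - by case/andP => Hx /eqP ->; exists y; rewrite ?inE.
    - by case=> v; rewrite !inE => Hv [-> ->]; rewrite Hv eqxx.
  rewrite card_imset ?cardsC1 ?subn1 //; by move=> v w [].

have dis : P1 :&: P2 = set0.
  apply/setP => [[x y]]; rewrite !inE /=; apply/negP.
  case/andP=> /andP[Hx /eqP Hy] /andP[Hy' /eqP Hx'].
  case: (par_spec Hx) => _; case: (par_spec Hy') => _; rewrite -Hy -Hx'; lia.
have : P1 :|: P2 == E.
  rewrite eqEcard sub /= cardsU dis cards0 c1 c2 Hcard; lia.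
move/eqP => HE; have : (a, b) \in E by rewrite inE.
by rewrite -HE !inE.
Qed.

Lemma edge_iff v y : e v y = ((v != u) && (y == par v)) || ((y != u) && (v == par y)).
Proof.
apply/idP/idP; first exact: tree_edge.
case/orP => /andP[H /eqP ->]; case: (par_spec H) => // H1 _; by rewrite Hsym.
Qed.

Lemma edge_excl v y : ~~ (((v != u) && (y == par v)) && ((y != u) && (v == par y))).
Proof.
apply/negP => /andP[/andP[Hx /eqP Hy] /andP[Hy' /eqP Hx']].
case: (par_spec Hx) => _; case: (par_spec Hy') => _; rewrite -Hy -Hx'; lia.
Qed.

Definition deg v := #|[set y | e v y]|.

Local Open Scope ring_scope.

Lemma deg_sum (R : numDomainType) (g : T -> R) :
  \sum_v (deg v)%:R * g v = \sum_(v | v != u) g v + \sum_(y | y != u) g (par y).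
Proof.
have Hd v : (deg v)%:R = \sum_y (((v != u) && (y == par v))%:R + ((y != u) && (v == par y))%:R) :> R.
  rewrite /deg -sum1_card natr_sum big_mkcond /=; apply: eq_bigr => y _.
  rewrite inE edge_iff; move: (edge_excl v y).
  by case: (v != u); case: (y == par v); case: (y != u); case: (v == par y); rewrite /= ?addr0 ?add0r.
rewrite (eq_bigr (fun v => \sum_y (((v != u) && (y == par v))%:R * g v
                                    + ((y != u) && (v == par y))%:R * g v))); last first.
  by move=> v _; rewrite Hd mulr_suml; apply: eq_bigr => y _; rewrite mulrDl.
rewrite (eq_bigr (fun v => \sum_y ((v != u) && (y == par v))%:R * g v
                           + \sum_y ((y != u) && (v == par y))%:R * g v)); last first.
  by move=> v _; rewrite big_split.
rewrite big_split /=; congr (_ + _).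
- rewrite [RHS]big_mkcond /=; apply: eq_bigr => v _.
  rewrite (bigD1 (par v)) //= eqxx andbT big1 ?addr0; last first.
    by move=> y /negbTE ->; rewrite andbF mul0r.
  by case: (v != u); rewrite ?mul1r ?mul0r.
- rewrite exchange_big [RHS]big_mkcond /=; apply: eq_bigr => y _.
  rewrite (bigD1 (par y)) //= eqxx andbT big1 ?addr0; last first.
    by move=> v /negbTE ->; rewrite andbF mul0r.
  by case: (y != u); rewrite ?mul1r ?mul0r.
Qed.

Lemma card_nonroot : #|[set~ u]| = (#|T| - 1)%N.
Proof. by rewrite cardsC1 subn1. Qed.

Lemma sum_deg (R : numDomainType) : \sum_v (deg v)%:R = ((#|T| - 1) + (#|T| - 1))%:R :> R.
Proof.
have := deg_sum (fun _ => 1 : R); rewrite (eq_bigr (fun v => (deg v)%:R)); last first.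
  by move=> v _; rewrite mulr1.
move=> ->; rewrite natrD -!card_nonroot -!sum1_card !natr_sum.
by congr (_ + _); apply: eq_bigl => v; rewrite !inE.
Qed.

Lemma sum_deficit (R : numFieldType) :
  \sum_v (3%:R - (deg v)%:R) * half_pow R (Some (dist v)) = 6%:R.
Proof.
set g := fun v => half_pow R (Some (dist v)).
rewrite (eq_bigr (fun v => 3%:R * g v - (deg v)%:R * g v)); last by move=> v _; rewrite mulrBl.
rewrite sumrB deg_sum.
have Hp y : y != u -> g (par y) = 2%:R * g y.
  move=> Hy; case: (par_spec Hy) => _ Hd; rewrite /g -Hd hp_S.
  by field.
set s := \sum_(i | i != u) g i.
have E0 : \sum_v 3%:R * g v = 3%:R * \sum_v g v by rewrite mulr_sumr.
have E1 : \sum_v g v = g u + s by rewrite (bigD1 u).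
have E2 : \sum_(y | y != u) g (par y) = 2%:R * s.
  by rewrite (eq_bigr (fun y => 2%:R * g y) Hp) mulr_sumr.
have E3 : g u = 2%:R by rewrite /g dist_root /= expr0 divr1.
rewrite E0 E1 E2 E3; ring.
Qed.

End Tree.


Section LowerB.


Local Open Scope ring_scope.

Lemma lower_bound (T : finType) (e : rel T) (Hsym : symmetric e)
  (Hconn : forall x y : T, connect e x y)
  (Hcard : #|[set p : T * T | e p.1 p.2]| = (2 * (#|T| - 1))%N)
  (Hsub : subcubic e) (u0 : T) (R : realFieldType) (x : T -> R)
  (Hx : porous_frac_feasible e x) :
  (#|T| + 2)%:R <= 6%:R * \sum_u x u.
Proof.
case: Hx => Hx0 Hx1.
set c := fun v => 3%:R - (deg e v)%:R : R.
have c0 v : 0 <= c v by rewrite /c subr_ge0 ler_nat; apply: Hsub.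
have Hn : (0 < #|T|)%N by apply/card_gt0P; exists u0.
have Sc : \sum_v c v = (#|T| + 2)%:R.
  rewrite sumrB (sum_deg Hsym Hconn Hcard u0) sumr_const.
  have -> : (3 : R) *+ #|T| = (3 * #|T|)%:R by rewrite natrM mulr_natr.
  rewrite -natrB; last by lia.
  congr (_%:R); lia.
rewrite -Sc.
apply: le_trans (_ : \sum_v c v * (\sum_u half_pow R (gdist e u v) * x u) <= _).
  by apply: ler_sum => v _; rewrite ler_peMr.
rewrite (eq_bigr (fun v => \sum_u c v * half_pow R (gdist e u v) * x u)); last first.
  by move=> v _; rewrite mulr_sumr; apply: eq_bigr => w _; rewrite mulrA.
rewrite exchange_big mulr_sumr le_eqVlt; apply/orP; left; apply/eqP.
apply: eq_bigr => w _.
rewrite -mulr_suml; congr (_ * _).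
rewrite -(sum_deficit Hsym Hconn Hcard w R); apply: eq_bigr => v _.
by rewrite (gdist_dist Hconn).
Qed.


End LowerB.

Section Weights.
Variables (T : finType) (E : rel T).
Local Open Scope ring_scope.

Lemma distD_Some (D : {set T}) u v k : distD E D u v = Some k -> Dpath_len E D u v k.
Proof.
rewrite /distD /=; case: ifP => // Hk [<-].
have hP : has (Dpath_len E D u v) (iota 0 #|T|) by rewrite has_find size_iota.
by have := nth_find 0 hP; rewrite nth_iota // add0n.
Qed.

Lemma hp_path (D : {set T}) u v p : Dcond E D u v p ->
  half_pow rat (Some (size p)) <= half_pow rat (distD E D u v).
Proof.
move=> H; have : Dpath_len E D u v (size p) by apply/DpathP; exists p.
case/distD_le => k' Hk ->; exact: hp_le.
Qed.

Lemma weight_ge_sub (D : {set T}) u (B : {set T}) : B \subset D ->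
  \sum_(v in B) half_pow rat (distD E D u v) <= exp_weight E D u.
Proof.
move=> HB; rewrite /exp_weight [X in _ <= X](big_setID B) /= (setIidPr HB) lerDl.
by apply: sumr_ge0 => v _; apply: hp_ge0.
Qed.

Lemma weight_self (D : {set T}) u : u \in D -> 2%:R <= exp_weight E D u.
Proof.
move=> Hu; have HB : [set u] \subset D by rewrite sub1set.
apply: le_trans (weight_ge_sub u HB); rewrite big_set1.
have : Dcond E D u u [::] by rewrite /Dcond /= eqxx Hu.
by move/hp_path; rewrite /= expr0 divr1.
Qed.

Lemma weight_adj (D : {set T}) u v : v \in D -> u \notin D -> E u v -> 1 <= exp_weight E D u.
Proof.
move=> Hv Hu Huv; have HB : [set v] \subset D by rewrite sub1set.
apply: le_trans (weight_ge_sub u HB); rewrite big_set1.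
have Hne : u != v by apply: contraNneq Hu => ->.
have : Dcond E D u v [:: v].
  by rewrite /Dcond /= Huv eqxx inE Hne (negbTE Hne) (negbTE Hu) Hv.
by move/hp_path; rewrite /= expr1 divff.
Qed.

End Weights.


Section Rooted.
Variables (T : finType) (e : rel T).
Hypothesis Hsym : symmetric e.
Hypothesis Hirr : irreflexive e.
Hypothesis Hconn : forall x y : T, connect e x y.
Hypothesis Hcard : #|[set p : T * T | e p.1 p.2]| = 2 * (#|T| - 1).
Hypothesis Hsub : subcubic e.
Variable r : T.
Hypothesis Hleaf : #|[set y | e r y]| <= 1.
Implicit Types (S D X A : {set T}).

Definition d := dist Hconn r.
Definition pa := par Hconn r.

Lemma pa_r : pa r = r. Proof. exact: par_root. Qed.
Lemma pa_edge v : v != r -> e (pa v) v. Proof. by move=> H; case: (par_spec Hconn Hcard H). Qed.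
Lemma d_pa v : v != r -> (d (pa v)).+1 = d v. Proof. by move=> H; case: (par_spec Hconn Hcard H). Qed.
Lemma d_r : d r = 0. Proof. exact: dist_root. Qed.
Lemma d0 v : d v = 0 -> v = r. Proof. exact: dist0. Qed.
Lemma d_lt v : d v < #|T|. Proof. exact: (dist_lt Hconn Hcard). Qed.
Lemma edgeE a b : e a b -> (a != r) && (b == pa a) || (b != r) && (a == pa b).
Proof. exact: (tree_edge Hsym Hconn Hcard). Qed.

Lemma neq_r v : 0 < d v -> v != r.
Proof. by move=> H; apply/eqP => E; move: H; rewrite E d_r. Qed.

Lemma d_iter k w : k <= d w -> d (iter k pa w) = d w - k.
Proof.
elim: k => [|k IH] H; first by rewrite subn0.
rewrite iterS; have Hk := IH (ltnW H).
have Hr : iter k pa w != r by apply: neq_r; lia.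
have := d_pa Hr; lia.
Qed.

Lemma iter_d w : iter (d w) pa w = r.
Proof. by apply: d0; rewrite d_iter // subnn. Qed.

Definition anc v w := (d v <= d w) && (iter (d w - d v) pa w == v).
Definition Desc v := [set w | anc v w].
Definition desc (S : {set T}) v := S :&: Desc v.
Definition ch (S : {set T}) v := [set w in S | (w != r) && (pa w == v)].
Definition anc_closed (S : {set T}) := forall w, w \in S -> pa w \in S.

Lemma anc_refl v : anc v v.
Proof. by rewrite /anc leqnn subnn eqxx. Qed.

Lemma anc_r w : anc r w.
Proof. by rewrite /anc d_r leq0n subn0 iter_d eqxx. Qed.

Lemma anc_d v w : anc v w -> d v <= d w.
Proof. by case/andP. Qed.

Lemma anc_eq v w : anc v w -> d v = d w -> v = w.
Proof. by case/andP => _ /eqP Hi Heq; rewrite Heq subnn in Hi; rewrite -Hi. Qed.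

Lemma anc_uniq c1 c2 w : anc c1 w -> anc c2 w -> d c1 = d c2 -> c1 = c2.
Proof. by case/andP => _ /eqP H1; case/andP => _ /eqP H2 Heq; rewrite -H1 -H2 Heq. Qed.

Lemma anc_pa c w : anc c w -> c != r -> anc (pa c) w.
Proof.
case/andP => H1 /eqP H2 Hc; have Hd := d_pa Hc.
rewrite /anc; apply/andP; split; first lia.
have -> : d w - d (pa c) = (d w - d c).+1 by lia.
by rewrite iterS H2.
Qed.

Lemma anc_child v w : anc v w -> w != v ->
  exists c, [/\ c != r, pa c = v, anc c w & d c = (d v).+1].
Proof.
move=> Ha Hne; have Hd := anc_d Ha.
have Hlt : d v < d w.
  rewrite ltn_neqAle Hd andbT; apply/negP => /eqP Heq.
  by move: Hne; rewrite (anc_eq Ha Heq) eqxx.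
case/andP: Ha => _ /eqP Hi.
set c := iter (d w - d v).-1 pa w.
have Hdc : d c = (d v).+1 by rewrite /c d_iter; lia.
have Hc : c != r by apply: neq_r; lia.
exists c; split => //.
- by rewrite /c -iterS prednK ?Hi //; lia.
- rewrite /anc Hdc; apply/andP; split; first lia.
  by have -> : d w - (d v).+1 = (d w - d v).-1 by lia.
Qed.

Lemma anc_ch S v c : c \in ch S v -> anc v c.
Proof.
rewrite inE => /andP[_ /andP[Hc /eqP <-]]; have := d_pa Hc => Hd.
rewrite /anc; apply/andP; split; first lia.
by rewrite -Hd subSnn.
Qed.

Lemma anc_trans u v w : anc u v -> anc v w -> anc u w.
Proof.
case/andP => H1 /eqP H2; case/andP => H3 /eqP H4.
rewrite /anc; apply/andP; split; first lia.
have -> : d w - d u = (d v - d u) + (d w - d v) by lia.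
by rewrite iterD H4 H2.
Qed.

Lemma anc_closed_iter S w k : anc_closed S -> w \in S -> iter k pa w \in S.
Proof. by move=> HS Hw; elim: k => [|k IH] //=; apply: HS. Qed.

Lemma anc_closed_anc S v w : anc_closed S -> w \in S -> anc v w -> v \in S.
Proof. by move=> HS Hw /andP[_ /eqP <-]; apply: anc_closed_iter. Qed.

Lemma anc_of_pa v w : anc v (pa w) -> w != r -> anc v w.
Proof.
move=> Ha Hw; have Hd := d_pa Hw; case/andP: Ha => H1 /eqP H2.
rewrite /anc; apply/andP; split; first lia.
have -> : d w - d v = (d (pa w) - d v).+1 by lia.
by rewrite iterSr H2.
Qed.

Lemma anc_closedD S v : anc_closed S -> anc_closed (S :\: Desc v).
Proof.
move=> HS w; rewrite !inE => /andP[Hn Hw]; rewrite HS // andbT.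
case: (eqVneq w r) => [E|Hr]; first by rewrite E pa_r -{1}E.
by apply: contra Hn => /anc_of_pa; apply.
Qed.

Lemma Desc_r v : r \in Desc v -> v = r.
Proof.
rewrite inE => Ha; have := anc_d Ha; rewrite d_r leqn0 => /eqP; exact: d0.
Qed.


Lemma ch_in S v c : c \in ch S v -> [/\ c \in S, c != r & pa c = v].
Proof. by rewrite inE => /andP[H1 /andP[H2 /eqP H3]]. Qed.

Lemma ch_d S v c : c \in ch S v -> d c = (d v).+1.
Proof. by case/ch_in => _ Hc <-; rewrite d_pa. Qed.

Lemma ch_edge S v c : c \in ch S v -> e v c.
Proof. by case/ch_in => _ Hc <-; apply: pa_edge. Qed.

Lemma ch_neq S v c : c \in ch S v -> c != v.
Proof. move=> Hc; apply/negP => /eqP E; have := ch_d Hc; rewrite E; lia. Qed.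

Lemma desc_self S v : v \in S -> v \in desc S v.
Proof. by move=> Hv; rewrite inE Hv inE anc_refl. Qed.

Lemma desc_ch_sub S v c : c \in ch S v -> desc S c \subset desc S v.
Proof.
move=> Hc; apply/subsetP => w; rewrite !inE => /andP[-> Ha] /=.
exact: anc_trans (anc_ch Hc) Ha.
Qed.

Lemma notin_desc_ch S v c : c \in ch S v -> v \notin desc S c.
Proof.
move=> Hc; rewrite !inE; apply/negP => /andP[_ Ha].
have := anc_d Ha; rewrite (ch_d Hc); lia.
Qed.

Lemma desc_ch_disj S v c1 c2 : c1 \in ch S v -> c2 \in ch S v -> c1 != c2 ->
  [disjoint desc S c1 & desc S c2].
Proof.
move=> H1 H2 Hne; apply/pred0P => w /=; rewrite !inE.
apply/negP => /andP[/andP[_ A1] /andP[_ A2]].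
by move: Hne; rewrite (anc_uniq A1 A2) ?eqxx // (ch_d H1) (ch_d H2).
Qed.

Lemma desc_split S v w : anc_closed S -> w \in desc S v -> w != v ->
  exists2 c, c \in ch S v & w \in desc S c.
Proof.
move=> HS; rewrite !inE => /andP[Hw Ha] Hne.
case: (anc_child Ha Hne) => c [Hc Hpc Hac _].
exists c; last by rewrite !inE Hw.
by rewrite inE (anc_closed_anc HS Hw Hac) Hc Hpc eqxx.
Qed.

Lemma desc_leaf S v : anc_closed S -> v \in S -> ch S v = set0 -> desc S v = [set v].
Proof.
move=> HS Hv H0; apply/setP => w; rewrite [RHS]inE.
case: (eqVneq w v) => [->|Hne]; first by rewrite desc_self.
apply/negP => Hw; case: (desc_split HS Hw Hne) => c; by rewrite H0 inE.
Qed.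

Lemma desc_one S v c : anc_closed S -> v \in S -> ch S v = [set c] ->
  desc S v = v |: desc S c.
Proof.
move=> HS Hv H1; have Hc : c \in ch S v by rewrite H1 set11.
apply/setP => w; rewrite [RHS]in_setU1.
case: (eqVneq w v) => [->|Hne] /=; first by rewrite desc_self.
apply/idP/idP => [Hw|Hw]; last by apply: (subsetP (desc_ch_sub Hc)).
by case: (desc_split HS Hw Hne) => c'; rewrite H1 inE => /eqP ->.
Qed.

Lemma desc_two S v c1 c2 : anc_closed S -> v \in S -> ch S v = [set c1; c2] ->
  desc S v = v |: (desc S c1 :|: desc S c2).
Proof.
move=> HS Hv H2.
have Hc1 : c1 \in ch S v by rewrite H2 !inE eqxx.
have Hc2 : c2 \in ch S v by rewrite H2 !inE eqxx orbT.
apply/setP => w; rewrite [RHS]in_setU1.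
case: (eqVneq w v) => [->|Hne] /=; first by rewrite desc_self.
apply/idP/idP => [Hw|].
  by case: (desc_split HS Hw Hne) => c'; rewrite H2 !inE => /orP[] /eqP -> ->; rewrite ?orbT.
by rewrite inE => /orP[Hw|Hw];
  [apply: (subsetP (desc_ch_sub Hc1)) | apply: (subsetP (desc_ch_sub Hc2))].
Qed.

Lemma card_desc_one S v c : anc_closed S -> v \in S -> ch S v = [set c] ->
  #|desc S v| = (#|desc S c|).+1.
Proof.
move=> HS Hv H1; have Hc : c \in ch S v by rewrite H1 set11.
by rewrite (desc_one HS Hv H1) cardsU1 (notin_desc_ch Hc).
Qed.

Lemma card_desc_two S v c1 c2 : anc_closed S -> v \in S -> ch S v = [set c1; c2] ->
  c1 != c2 -> #|desc S v| = (#|desc S c1| + #|desc S c2|).+1.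
Proof.
move=> HS Hv H2 Hne.
have Hc1 : c1 \in ch S v by rewrite H2 !inE eqxx.
have Hc2 : c2 \in ch S v by rewrite H2 !inE eqxx orbT.
rewrite (desc_two HS Hv H2) cardsU1 in_setU (negbTE (notin_desc_ch Hc1)).
rewrite (negbTE (notin_desc_ch Hc2)) /= cardsU.
by rewrite (disjoint_setI0 (desc_ch_disj Hc1 Hc2 Hne)) cards0 subn0 add1n.
Qed.

Lemma card_ch S v : v != r -> #|ch S v| <= 2.
Proof.
move=> Hv; have Hp : pa v \in [set y | e v y] by rewrite inE Hsym pa_edge.
have Hn : pa v \notin ch S v.
  by apply/negP => /ch_d; have := d_pa Hv; lia.
have Hsb : ch S v \subset [set y | e v y] :\ pa v.
  apply/subsetP => c Hc; rewrite !inE (ch_edge Hc) andbT.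
  by apply/negP => /eqP E; move: Hn; rewrite -E Hc.
have := subset_leq_card Hsb; have := cardsD1 (pa v) [set y | e v y].
rewrite Hp; have := Hsub v; lia.
Qed.

Lemma card_ch_r S : #|ch S r| <= 1.
Proof.
have Hsb : ch S r \subset [set y | e r y].
  by apply/subsetP => c Hc; rewrite inE (ch_edge Hc).
by have := subset_leq_card Hsb; lia.
Qed.

Lemma ch_cases S v : #|ch S v| <= 2 ->
  [\/ ch S v = set0, exists c, ch S v = [set c]
    | exists c1 c2, c1 != c2 /\ ch S v = [set c1; c2]].
Proof.
move=> H; case: (ltngtP #|ch S v| 1) => H1.
- by constructor 1; apply: cards0_eq; lia.
- have /cards2P[c1 [c2 [Hn E]]] : #|ch S v| == 2 by apply/eqP; lia.
  by constructor 3; exists c1, c2.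
- by constructor 2; apply/cards1P; rewrite H1.
Qed.

Lemma desc_rE S : desc S r = S.
Proof. by apply/setP => w; rewrite !inE anc_r andbT. Qed.

Definition eS (S : {set T}) : rel T := fun x y => e x y && (x \in S) && (y \in S).
Definition W S D u := exp_weight (eS S) D u.

Lemma path_eS_in S x p : path (eS S) x p -> {subset p <= S}.
Proof.
elim: p x => [|y p IH] x //= /andP[/andP[/andP[_ _] Hy] Hp] z.
by rewrite inE => /orP[/eqP ->|] //; exact: IH Hp z.
Qed.

Lemma subrel_eS S S' : S' \subset S -> subrel (eS S') (eS S).
Proof.
move=> H x y; rewrite /eS => /andP[/andP[-> Hx] Hy].
by rewrite (subsetP H _ Hx) (subsetP H _ Hy).
Qed.

Local Open Scope ring_scope.

Lemma mono S S' D' X u : S' \subset S -> D' \subset S' -> [disjoint X & S'] -> u \in S' ->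
  W S' D' u <= W S (D' :|: X) u.
Proof.
move=> HSS HD HX Hu.
have HDsub : D' \subset D' :|: X by apply: subsetUl.
apply: le_trans (weight_ge_sub (eS S) u HDsub); rewrite /W /exp_weight.
apply: ler_sum => v Hv.
case Hd: (distD (eS S') D' u v) => [k|]; last by apply: hp_ge0.
case/DpathP: (distD_Some Hd) => p [Hs Hc].
rewrite -Hs; apply: hp_path.
case/and5P: Hc => Hp Hl Hun Hall Hend.
have HpS := path_eS_in Hp.
have inX z : z \in S' -> (z \in D' :|: X) = (z \in D').
  move=> Hz; rewrite inE; case: (z \in D') => //=; apply/negP => Hzx.
  by rewrite (disjointFr HX Hzx) in Hz.
have HvS : v \in S'.
  by move/eqP: Hl => <-; move: (mem_last u p); rewrite inE => /orP[/eqP ->|/HpS].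
rewrite /Dcond (sub_path (subrel_eS HSS) Hp) Hl Hun /= !inX //.
rewrite Hend andbT; apply/allP => z Hz; rewrite inX; last by apply: HpS; apply: mem_take Hz.
by move/allP: Hall; apply.
Qed.

Lemma ext S S' D' X v l : S' \subset S -> D' \subset S' -> [disjoint X & S'] ->
  v \in S' -> v \notin D' -> l \in S -> l \notin S' -> l \notin X -> e l v ->
  W S' D' v / 2%:R <= \sum_(w in D') half_pow rat (distD (eS S) (D' :|: X) l w).
Proof.
move=> HSS HD HX Hv HvD Hl HlS HlX Hlv.
rewrite /W /exp_weight mulr_suml; apply: ler_sum => w Hw.
case Hd: (distD (eS S') D' v w) => [k|]; last by rewrite mul0r; apply: hp_ge0.
case/DpathP: (distD_Some Hd) => p [Hs Hc].
case/and5P: Hc => Hp Hlast Hun Hall Hend.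
have HpS := path_eS_in Hp.
have HwS : w \in S' by apply: (subsetP HD).
have inX z : z \in S' -> (z \in D' :|: X) = (z \in D').
  move=> Hz; rewrite inE; case: (z \in D') => //=; apply/negP => Hzx.
  by rewrite (disjointFr HX Hzx) in Hz.
case: p Hs Hp Hlast Hun Hall Hend HpS => [|y p] Hs Hp Hlast Hun Hall Hend HpS.
  by move: Hlast Hend HvD => /= /eqP ->; rewrite eqxx => ->.
rewrite -Hs -hp_S; apply: (hp_path (p := v :: y :: p)).
have HlD : (l \in D' :|: X) = false.
  by rewrite inE (negbTE HlX) orbF; apply/negP => /(subsetP HD); rewrite (negbTE HlS).
have Hlw : (l == w) = false by apply/negP => /eqP E; move: HlS; rewrite E HwS.
have HlvS : l \notin v :: y :: p.
  rewrite inE negb_or; apply/andP; split.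
    by apply/negP => /eqP E; move: HlS; rewrite E Hv.
  by apply/negP => /HpS; rewrite (negbTE HlS).
have Hp2 : path (eS S) v (y :: p) := sub_path (subrel_eS HSS) Hp.
rewrite /Dcond; apply/and5P; split.
- have -> : path (eS S) l (v :: y :: p) = eS S l v && path (eS S) v (y :: p) by [].
  by rewrite Hp2 andbT /eS Hlv Hl (subsetP HSS _ Hv).
- exact: Hlast.
- have -> : uniq (l :: v :: y :: p) = (l \notin v :: y :: p) && uniq (v :: y :: p) by [].
  by rewrite HlvS Hun.
- have -> : take (size (v :: y :: p)).-1 (v :: y :: p) = v :: take (size (y :: p)).-1 (y :: p) by [].
  rewrite /= inX // HvD /=.
  apply/allP => z Hz; rewrite inX; last by apply: HpS; apply: mem_take Hz.
  by move/allP: Hall; apply.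
- by rewrite Hlw HlD inX // Hw.
Qed.


Lemma take_notlast (y u z : T) q : uniq (y :: q) -> last y q = u ->
  z \in take (size q).-1 q -> z != u.
Proof.
case/lastP: q => [|q a] //= Hu Hl.
rewrite last_rcons in Hl; subst a.
rewrite size_rcons /= -cats1 take_size_cat // => Hz.
move: Hu => /= /andP[_]; rewrite rcons_uniq => /andP[Hn _].
by apply/negP => /eqP E; move: Hn; rewrite -E Hz.
Qed.

Inductive LT (S : {set T}) : T -> {set T} -> Prop :=
| LTleg u l : u \in S -> ch S u = [set l] -> ch S l = set0 -> LT S u [set u]
| LTnode u c1 c2 A1 A2 : u \in S -> c1 != c2 -> ch S u = [set c1; c2] ->
    LT S c1 A1 -> LT S c2 A2 -> LT S u (A1 :|: A2).

Lemma LT_S S u A : LT S u A -> u \in S.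
Proof. by case. Qed.

Lemma ch2_in S u c1 c2 : ch S u = [set c1; c2] -> c1 \in ch S u /\ c2 \in ch S u.
Proof. by move=> H; rewrite H !inE !eqxx ?orbT. Qed.

Lemma LT_sub S (HS : anc_closed S) u A : LT S u A -> A \subset desc S u.
Proof.
elim => {u A} [u l Hu _ _ | u c1 c2 A1 A2 Hu Hne Hch H1 IH1 H2 IH2].
  by rewrite sub1set desc_self.
case: (ch2_in Hch) => Hc1 Hc2.
rewrite subUset; apply/andP; split.
  exact: subset_trans IH1 (desc_ch_sub Hc1).
exact: subset_trans IH2 (desc_ch_sub Hc2).
Qed.

Lemma LT_disj S (HS : anc_closed S) u c1 c2 A1 A2 : ch S u = [set c1; c2] -> c1 != c2 ->
  LT S c1 A1 -> LT S c2 A2 -> [disjoint A1 & A2].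
Proof.
move=> Hch Hne H1 H2; case: (ch2_in Hch) => Hc1 Hc2.
exact: disjointW (LT_sub HS H1) (LT_sub HS H2) (desc_ch_disj Hc1 Hc2 Hne).
Qed.

Lemma LT_size S (HS : anc_closed S) u A : LT S u A -> (#|desc S u|).+1 = 3 * #|A|.
Proof.
elim => {u A} [u l Hu Hch Hl | u c1 c2 A1 A2 Hu Hne Hch H1 IH1 H2 IH2].
  have Hl' : l \in ch S u by rewrite Hch set11.
  have HlS : l \in S by case/ch_in: Hl'.
  by rewrite (card_desc_one HS Hu Hch) (desc_leaf HS HlS Hl) !cards1.
rewrite (card_desc_two HS Hu Hch Hne) cardsU (disjoint_setI0 (LT_disj HS Hch Hne H1 H2)).
rewrite cards0 subn0; lia.
Qed.

Lemma LT_HD S (HS : anc_closed S) u c1 c2 A1 A2 D : u \in S -> ch S u = [set c1; c2] ->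
  c1 != c2 -> A1 \subset desc S c1 -> A2 \subset desc S c2 ->
  D :&: desc S u = A1 :|: A2 -> D :&: desc S c1 = A1.
Proof.
move=> Hu Hch Hne S1 S2 HD; case: (ch2_in Hch) => Hc1 Hc2.
apply/setP => w; apply/idP/idP.
- rewrite inE => /andP[HwD Hw1].
  have Hw : w \in D :&: desc S u by rewrite inE HwD (subsetP (desc_ch_sub Hc1)).
  move: Hw; rewrite HD inE => /orP[] // Hw2.
  have := desc_ch_disj Hc1 Hc2 Hne; move/disjointFr/(_ Hw1).
  by rewrite (subsetP S2 _ Hw2).
- move=> Hw1; have Hw : w \in A1 :|: A2 by rewrite inE Hw1.
  rewrite inE (subsetP S1 _ Hw1) andbT.
  by move: Hw; rewrite -HD inE => /andP[].
Qed.

Local Open Scope ring_scope.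

Lemma LTw S (HS : anc_closed S) u A (H : LT S u A) : forall D y q,
  D :&: desc S u = A -> path (eS S) y q -> last y q = u -> uniq (y :: q) ->
  (forall z, z \in y :: q -> z != u -> (z \notin desc S u) && (z \notin D)) ->
  half_pow rat (Some (size q)) <= \sum_(w in A) half_pow rat (distD (eS S) D y w).
Proof.
elim: H => {u A} [u l Hu Hch Hl | u c1 c2 A1 A2 Hu Hne Hch H1 IH1 H2 IH2]
   D y q HD Hp Hlast Hun Hz.
- rewrite big_set1; apply: hp_path.
  have HuD : u \in D by move: (set11 u); rewrite -HD inE => /andP[].
  rewrite /Dcond Hp Hlast eqxx Hun /=; apply/andP; split.
    apply/allP => z Hzt; have Hzu := take_notlast Hun Hlast Hzt.
    have Hzq : z \in y :: q by rewrite inE (mem_take Hzt) orbT.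
    by case/andP: (Hz z Hzq Hzu).
  case: (eqVneq y u) => [->|Hyu]; first by rewrite HuD.
  by case/andP: (Hz y (mem_head _ _) Hyu) => _ /negbTE ->; rewrite HuD.
- case: (ch2_in Hch) => Hc1 Hc2.
  have S1 := LT_sub HS H1; have S2 := LT_sub HS H2.
  have HD1 := LT_HD HS Hu Hch Hne S1 S2 HD.
  have Hch' : ch S u = [set c2; c1] by rewrite Hch setUC.
  have HD2 : D :&: desc S c2 = A2.
    by apply: (LT_HD HS Hu Hch' _ S2 S1); rewrite 1?eq_sym // setUC.
  have HuD : u \notin D.
    apply/negP => HuD; have : u \in D :&: desc S u by rewrite inE HuD desc_self.
    rewrite HD inE => /orP[/(subsetP S1)|/(subsetP S2)].
      by rewrite (negbTE (notin_desc_ch Hc1)).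
    by rewrite (negbTE (notin_desc_ch Hc2)).
  have Hdis := LT_disj HS Hch Hne H1 H2.
  have step c A' (Hc : c \in ch S u) (HA : D :&: desc S c = A')
      (IH : forall D y q, D :&: desc S c = A' -> path (eS S) y q -> last y q = c ->
            uniq (y :: q) ->
            (forall z, z \in y :: q -> z != c -> (z \notin desc S c) && (z \notin D)) ->
            half_pow rat (Some (size q)) <= \sum_(w in A') half_pow rat (distD (eS S) D y w)) :
      half_pow rat (Some (size q).+1) <= \sum_(w in A') half_pow rat (distD (eS S) D y w).
    have HcS : c \in S by case/ch_in: Hc.
    have Hcu : c != u by apply/negP => /eqP E; have := ch_d Hc; rewrite E; lia.
    have Hcd : c \in desc S u by apply: (subsetP (desc_ch_sub Hc)); apply: desc_self.
    have := IH D y (rcons q c) HA; rewrite size_rcons; apply.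
    + by rewrite rcons_path Hp Hlast /eS (ch_edge Hc) Hu HcS.
    + by rewrite last_rcons.
    + rewrite -rcons_cons rcons_uniq Hun andbT; apply/negP => Hcq.
      by case/andP: (Hz c Hcq Hcu); rewrite Hcd.
    + move=> z; rewrite -rcons_cons mem_rcons inE => /orP[/eqP ->|Hzq]; first by rewrite eqxx.
      move=> _; case: (eqVneq z u) => [->|Hzu]; first by rewrite (notin_desc_ch Hc) HuD.
      case/andP: (Hz z Hzq Hzu) => Hzd ->; rewrite andbT.
      by apply: contra Hzd; apply: (subsetP (desc_ch_sub Hc)).
  have E1 := step c1 A1 Hc1 HD1 IH1.
  have E2 := step c2 A2 Hc2 HD2 IH2.
  set F := fun w => half_pow rat (distD (eS S) D y w).
  have Hsplit : \sum_(w in A1 :|: A2) F w = \sum_(w in A1) F w + \sum_(w in A2) F w.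
    by rewrite (eq_bigl [predU A1 & A2]) ?bigU // => w; rewrite !inE.
  rewrite Hsplit; have := hp_S rat (size q); lra.
Qed.

Lemma LTdom S (HS : anc_closed S) u A (H : LT S u A) : forall D,
  D :&: desc S u = A -> forall x, x \in desc S u -> 1 <= W S D x.
Proof.
elim: H => {u A} [u l Hu Hch Hl | u c1 c2 A1 A2 Hu Hne Hch H1 IH1 H2 IH2] D HD x Hx.
- have Hl' : l \in ch S u by rewrite Hch set11.
  have HlS : l \in S by case/ch_in: Hl'.
  have HuD : u \in D by move: (set11 u); rewrite -HD inE => /andP[].
  have Hlu : l != u by apply/negP => /eqP E; have := ch_d Hl'; rewrite E; lia.
  move: Hx; rewrite (desc_one HS Hu Hch) (desc_leaf HS HlS Hl) !inE => /orP[/eqP ->|/eqP ->].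
    by apply: le_trans (weight_self (eS S) HuD); rewrite ler1n.
  apply: (weight_adj HuD).
    apply/negP => HlD; have : l \in D :&: desc S u.
      rewrite inE HlD; apply: (subsetP (desc_ch_sub Hl')); exact: desc_self.
    by rewrite HD inE (negbTE Hlu).
  by rewrite /eS Hsym (ch_edge Hl') HlS Hu.
- case: (ch2_in Hch) => Hc1 Hc2.
  have S1 := LT_sub HS H1; have S2 := LT_sub HS H2.
  have HD1 := LT_HD HS Hu Hch Hne S1 S2 HD.
  have Hch' : ch S u = [set c2; c1] by rewrite Hch setUC.
  have HD2 : D :&: desc S c2 = A2.
    by apply: (LT_HD HS Hu Hch' _ S2 S1); rewrite 1?eq_sym // setUC.
  move: Hx; rewrite (desc_two HS Hu Hch) !inE => /orP[/eqP ->|/orP[Hx|Hx]].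
  + have HuD : u \notin D.
      apply/negP => HuD; have : u \in D :&: desc S u by rewrite inE HuD desc_self.
      rewrite HD inE => /orP[/(subsetP S1)|/(subsetP S2)].
        by rewrite (negbTE (notin_desc_ch Hc1)).
      by rewrite (negbTE (notin_desc_ch Hc2)).
    have HA1 : A1 \subset D by rewrite -HD1 subsetIl.
    apply: le_trans (weight_ge_sub (eS S) u HA1).
    have HcS : c1 \in S by case/ch_in: Hc1.
    have := LTw HS H1 (y := u) (q := [:: c1]) HD1; rewrite /= expr1 divff //; apply.
    * by rewrite /eS (ch_edge Hc1) Hu HcS.
    * by [].
    * rewrite /= inE andbT; apply/negP => /eqP E; have := ch_d Hc1; rewrite E; lia.
    * move=> z Hz Hzc; have -> : z = u.
        by move: Hz Hzc; rewrite !inE => /orP[/eqP->|/eqP->] //; rewrite eqxx.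
      by rewrite (notin_desc_ch Hc1) HuD.
  + have Hx' : x \in desc S c1 by rewrite !inE.
    exact: IH1 D HD1 x Hx'.
  + have Hx' : x \in desc S c2 by rewrite !inE.
    exact: IH2 D HD2 x Hx'.
Qed.



Definition Red S := exists R X : {set T},
  [/\ R \subset S, r \notin R & R != set0] /\ [/\ anc_closed (S :\: R),
      X \subset R, (3 * #|X| <= #|R|)%N &
      forall D', D' \subset S :\: R ->
        (forall u, u \in S :\: R -> 1 <= W (S :\: R) D' u) ->
        forall y, y \in R -> 1 <= W S (D' :|: X) y].

Lemma disj_SR S (R : {set T}) X : X \subset R -> [disjoint X & S :\: R].
Proof.
move=> H; apply/pred0P => w /=; apply/negP => /andP[Hw]; rewrite inE => /andP[Hn _].
by move: Hn; rewrite (subsetP H _ Hw).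
Qed.

Lemma notin_D' S (R : {set T}) D' z : D' \subset S :\: R -> z \in R -> z \notin D'.
Proof.
by move=> H Hz; apply/negP => /(subsetP H); rewrite inE Hz.
Qed.

Lemma SD_desc S v : S :\: desc S v = S :\: Desc v.
Proof. by apply/setP => w; rewrite !inE; case: (w \in S); rewrite ?andbT ?andbF. Qed.

Lemma r_notin_desc S v : v != r -> r \notin desc S v.
Proof. by move=> Hv; apply/negP; rewrite inE => /andP[_ /Desc_r /eqP]; rewrite (negbTE Hv). Qed.

Lemma W_split S D' X y : [disjoint D' & X] ->
  \sum_(w in D') half_pow rat (distD (eS S) (D' :|: X) y w) +
  \sum_(w in X) half_pow rat (distD (eS S) (D' :|: X) y w) = W S (D' :|: X) y.
Proof.
move=> H; rewrite /W /exp_weight [RHS](eq_bigl [predU D' & X]) ?bigU //.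
by move=> w; rewrite !inE.
Qed.

Lemma RedA S v c1 c2 : anc_closed S -> v \in S -> v != r -> ch S v = [set c1; c2] ->
  c1 != c2 -> ch S c1 = set0 -> ch S c2 = set0 -> Red S.
Proof.
move=> HS Hv Hvr Hch Hne H1 H2; case: (ch2_in Hch) => Hc1 Hc2.
have Hc1S : c1 \in S by case/ch_in: Hc1.
have Hc2S : c2 \in S by case/ch_in: Hc2.
have HR : desc S v = [set v; c1; c2].
  rewrite (desc_two HS Hv Hch) (desc_leaf HS Hc1S H1) (desc_leaf HS Hc2S H2).
  by rewrite setUA.
exists (desc S v), [set v]; split; split.
- exact: subsetIl.
- exact: r_notin_desc.
- by apply/set0Pn; exists v; apply: desc_self.
- by rewrite SD_desc; apply: anc_closedD.
- by rewrite sub1set desc_self.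
- by rewrite cards1 (card_desc_two HS Hv Hch Hne) (desc_leaf HS Hc1S H1) (desc_leaf HS Hc2S H2) !cards1.
move=> D' HD' _ y Hy.
have HvD : v \in D' :|: [set v] by rewrite !inE eqxx orbT.
move: (Hy); rewrite HR !inE => /orP[/orP[/eqP ->|/eqP ->]|/eqP ->].
- by apply: le_trans (weight_self (eS S) HvD); rewrite ler1n.
- apply: (weight_adj HvD).
    rewrite !inE negb_or (notin_D' HD') ?HR ?inE ?eqxx ?orbT //=.
    by apply/negP => /eqP E; have := ch_d Hc1; rewrite E; lia.
  by rewrite /eS Hsym (ch_edge Hc1) Hv Hc1S.
- apply: (weight_adj HvD).
    rewrite !inE negb_or (notin_D' HD') ?HR ?inE ?eqxx ?orbT //=.
    by apply/negP => /eqP E; have := ch_d Hc2; rewrite E; lia.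
  by rewrite /eS Hsym (ch_edge Hc2) Hv Hc2S.
Qed.

Lemma RedB S v c A : anc_closed S -> v \in S -> v != r -> ch S v = [set c] ->
  LT S c A -> Red S.
Proof.
move=> HS Hv Hvr Hch HL; have Hc : c \in ch S v by rewrite Hch set11.
have HcS : c \in S by case/ch_in: Hc.
have SA := LT_sub HS HL.
have SR : desc S c \subset desc S v := desc_ch_sub Hc.
exists (desc S v), A; split; split.
- exact: subsetIl.
- exact: r_notin_desc.
- by apply/set0Pn; exists v; apply: desc_self.
- by rewrite SD_desc; apply: anc_closedD.
- exact: subset_trans SA SR.
- by rewrite (card_desc_one HS Hv Hch) (LT_size HS HL).
move=> D' HD' _ y Hy.
have HD : (D' :|: A) :&: desc S c = A.
  apply/setP => w; rewrite !inE; apply/idP/idP.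
    case/andP => /orP[Hw|Hw] Hd //.
    have Hw' : w \in desc S c by rewrite !inE.
    by move: (notin_D' HD' (subsetP SR _ Hw')); rewrite Hw.
  move=> Hw; have := subsetP SA _ Hw; rewrite !inE => ->; by rewrite Hw orbT.
move: Hy; rewrite (desc_one HS Hv Hch) in_setU1 => /orP[/eqP ->|Hy]; last first.
  exact: (LTdom HS HL HD Hy).
have HvD : v \notin D' :|: A.
  rewrite inE negb_or (notin_D' HD' (desc_self Hv)) /=.
  by apply/negP => /(subsetP SA); rewrite (negbTE (notin_desc_ch Hc)).
have HA : A \subset D' :|: A by apply: subsetUr.
apply: le_trans (weight_ge_sub (eS S) v HA).
have := LTw HS HL (y := v) (q := [:: c]) HD; rewrite /= expr1 divff //; apply.
- by rewrite /eS (ch_edge Hc) Hv HcS.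
- by [].
- rewrite /= inE andbT; apply/negP => /eqP E; have := ch_d Hc; rewrite E; lia.
- move=> z Hz Hzc; have -> : z = v.
    by move: Hz Hzc; rewrite !inE => /orP[/eqP->|/eqP->] //; rewrite eqxx.
  by rewrite (notin_desc_ch Hc) HvD.
Qed.


Lemma RedC S v l c A : anc_closed S -> v \in S -> ch S v = [set l; c] ->
  l != c -> ch S l = set0 -> LT S c A -> Red S.
Proof.
move=> HS Hv Hch Hne Hl HL; case: (ch2_in Hch) => Hl' Hc.
have HlS : l \in S by case/ch_in: Hl'.
have HcS : c \in S by case/ch_in: Hc.
have Hlr : l != r by case/ch_in: Hl'.
have Hcr : c != r by case/ch_in: Hc.
have SA := LT_sub HS HL.
have Hdl : desc S l = [set l] := desc_leaf HS HlS Hl.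
have Hlc : l \notin desc S c.
  by rewrite (disjointFr (desc_ch_disj Hl' Hc Hne) (desc_self HlS)).
set R := l |: desc S c.
have HRS : R \subset S by rewrite subUset sub1set HlS subsetIl.
have HvR : v \notin R.
  rewrite in_setU1 negb_or (notin_desc_ch Hc) andbT.
  by apply/negP => /eqP E; have := ch_d Hl'; rewrite E; lia.
have HSR : S :\: R = (S :\: Desc l) :\: Desc c.
  apply/setP => w; rewrite !inE; case Hw: (w \in S); rewrite ?andbF ?andbT //=.
  have E : anc l w = (w == l).
    by move: (f_equal (fun B : {set T} => w \in B) Hdl); rewrite /= !inE Hw.
  by rewrite E; case: (w == l); case: (anc c w).
exists R, A; split; split.
- exact: HRS.
- by rewrite in_setU1 negb_or eq_sym Hlr r_notin_desc.
- by apply/set0Pn; exists l; rewrite in_setU1 eqxx.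
- by rewrite HSR; apply: anc_closedD; apply: anc_closedD.
- by apply: subset_trans SA _; apply: subsetUr.
- by rewrite /R cardsU1 Hlc add1n (LT_size HS HL).
move=> D' HD' HW y Hy.
have HD : (D' :|: A) :&: desc S c = A.
  apply/setP => w; rewrite !inE; apply/idP/idP.
    case/andP => /orP[Hw|Hw] Hd //.
    have Hw' : w \in R by rewrite in_setU1 !inE Hd orbT.
    by move: (notin_D' HD' Hw'); rewrite Hw.
  move=> Hw; have := subsetP SA _ Hw; rewrite !inE => ->; by rewrite Hw orbT.
move: Hy; rewrite in_setU1 => /orP[/eqP ->|Hy]; last exact: (LTdom HS HL HD Hy).
have HlR : l \in R by rewrite in_setU1 eqxx.
have HlD : l \notin D' :|: A.
  rewrite inE negb_or (notin_D' HD' HlR) /=.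
  by apply/negP => /(subsetP SA); rewrite (negbTE Hlc).
have HvS' : v \in S :\: R by rewrite inE HvR Hv.
have Hlv : e l v by rewrite Hsym (ch_edge Hl').
case HvD: (v \in D').
  apply: (weight_adj (v := v)) => //; first by rewrite inE HvD.
  by rewrite /eS Hlv HlS Hv.
have HsubS : S :\: R \subset S by apply: subsetDl.
have HdA : [disjoint A & S :\: R].
  by apply: disj_SR; apply: subset_trans SA _; apply: subsetUr.
have HlS' : l \notin S :\: R by rewrite inE HlR.
have HlA : l \notin A by apply/negP => /(subsetP SA); rewrite (negbTE Hlc).
have E1 := ext HsubS HD' HdA HvS' (negbT HvD) HlS HlS' HlA Hlv.
have E0 := HW v HvS'.
have HvD2 : v \notin D' :|: A.
  by rewrite inE HvD /=; apply/negP => /(subsetP SA); rewrite (negbTE (notin_desc_ch Hc)).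
have E2 : half_pow rat (Some 2) <= \sum_(w in A) half_pow rat (distD (eS S) (D' :|: A) l w).
  have := LTw HS HL (y := l) (q := [:: v; c]) HD; apply.
  - by rewrite /= /eS Hlv HlS Hv (ch_edge Hc) HcS.
  - by [].
  - rewrite /= !inE negb_or andbT Hne andbT; apply/andP; split.
    + exact: ch_neq Hl'.
    + by rewrite eq_sym (ch_neq Hc).
  - move=> z Hz Hzc; have Hz' : (z == l) || (z == v).
      by move: Hz Hzc; rewrite !inE => /or3P[] /eqP -> //; rewrite ?eqxx ?orbT.
    case/orP: Hz' => /eqP ->; first by rewrite Hlc HlD.
    by rewrite (notin_desc_ch Hc) HvD2.
have Hdis : [disjoint D' & A].
  apply/pred0P => w /=; apply/negP => /andP[Hw1 Hw2].
  have Hw : w \in R by apply: (subsetP (subset_trans SA (subsetUr _ _))).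
  by move: (notin_D' HD' Hw); rewrite Hw1.
rewrite -(W_split _ _ Hdis).
move: E0 E1 E2; rewrite /= expr2 => E0 E1 E2.
have H4 : (2%:R : rat) / (2%:R * 2%:R) = 1 / 2%:R by field.
rewrite H4 in E2; lra.
Qed.


Lemma SL S (HS : anc_closed S) k : forall v, v \in S -> v != r -> (#|T| - d v <= k)%N ->
  [\/ ch S v = set0, exists A, LT S v A | Red S].
Proof.
elim: k => [|k IH] v Hv Hvr Hk.
  by have := d_lt v; lia.
have IHc c : c \in ch S v -> [\/ ch S c = set0, exists A, LT S c A | Red S].
  move=> Hc; case/ch_in: (Hc) => HcS Hcr _; apply: IH => //.
  by have := ch_d Hc; have := d_lt c; lia.
case: (ch_cases (card_ch S Hvr)) => [H0|[c H1]|[c1 [c2 [Hne H2]]]].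
- by constructor 1.
- have Hc : c \in ch S v by rewrite H1 set11.
  case: (IHc c Hc) => [Hc0|[A HA]|Hred].
  + by constructor 2; exists [set v]; exact: LTleg Hv H1 Hc0.
  + by constructor 3; exact: RedB HS Hv Hvr H1 HA.
  + by constructor 3.
- case: (ch2_in H2) => Hc1 Hc2.
  case: (IHc c1 Hc1) => [H10|[A1 HA1]|Hred]; last by constructor 3.
  + case: (IHc c2 Hc2) => [H20|[A2 HA2]|Hred]; last by constructor 3.
    * by constructor 3; exact: RedA HS Hv Hvr H2 Hne H10 H20.
    * by constructor 3; exact: RedC HS Hv H2 Hne H10 HA2.
  + case: (IHc c2 Hc2) => [H20|[A2 HA2]|Hred]; last by constructor 3.
    * constructor 3; apply: (RedC HS Hv _ _ H20 HA1); first by rewrite H2 setUC.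
      by rewrite eq_sym.
    * by constructor 2; exists (A1 :|: A2); exact: LTnode Hv Hne H2 HA1 HA2.
Qed.

Lemma claim n : forall S, (#|S| <= n)%N -> anc_closed S -> r \in S ->
  exists D, [/\ D \subset S, (3 * #|D| <= #|S| + 2)%N &
                forall u, u \in S -> 1 <= W S D u].
Proof.
elim: n => [|n IH] S Hn HS Hr.
  by move: Hn; rewrite leqn0 => /eqP/cards0_eq E; rewrite E inE in Hr.
have Hch := card_ch_r S.
have HSr : desc S r = S := desc_rE S.
case: (eqVneq #|ch S r| 0) => [/cards0_eq H0|Hne0].
  have HS1 : S = [set r] by rewrite -HSr (desc_leaf HS Hr H0).
  exists [set r]; split.
  - by rewrite HS1.
  - by rewrite HS1 cards1.
  move=> u; rewrite {1}HS1 inE => /eqP ->.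
  by apply: le_trans (weight_self (eS S) (set11 r)); rewrite ler1n.
have /cards1P[c Hc1] : #|ch S r| == 1%N by apply/eqP; lia.
have Hc : c \in ch S r by rewrite Hc1 set11.
case/ch_in: (Hc) => HcS Hcr _.
have HSc : S = r |: desc S c by rewrite -{1}HSr (desc_one HS Hr Hc1).
have Hrc : r \notin desc S c := notin_desc_ch Hc.
have Hcd : c \in desc S c := desc_self HcS.
case: (SL HS HcS Hcr (leqnn _)) => [H0|[A HA]|[R [X [[HRS HrR HR0] [HSR HXR HXc HW]]]]].
- have Hdc : desc S c = [set c] := desc_leaf HS HcS H0.
  exists [set r]; split.
  + by rewrite sub1set.
  + by rewrite HSc cardsU1 Hrc Hdc !cards1.
  move=> u; rewrite {1}HSc Hdc !inE => /orP[/eqP ->|/eqP ->].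
    by apply: le_trans (weight_self (eS S) (set11 r)); rewrite ler1n.
  apply: (weight_adj (v := r)); first exact: set11.
    by rewrite inE; apply/negP => /eqP E; move: Hrc; rewrite -E Hcd.
  by rewrite /eS Hsym (ch_edge Hc) Hr HcS.
- have SA := LT_sub HS HA.
  have HD : A :&: desc S c = A by apply/setIidPl.
  exists A; split.
  + by apply: subset_trans SA _; apply: subsetIl.
  + by rewrite HSc cardsU1 Hrc add1n; have := LT_size HS HA; lia.
  move=> u; rewrite {1}HSc in_setU1 => /orP[/eqP ->|Hu]; last exact: (LTdom HS HA HD Hu).
  have HrA : r \notin A by apply: contra Hrc; apply: (subsetP SA).
  apply: le_trans (weight_ge_sub (eS S) r (subxx A)).
  have := LTw HS HA (y := r) (q := [:: c]) HD; rewrite /= expr1 divff //; apply.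
  + by rewrite /eS (ch_edge Hc) Hr HcS.
  + by [].
  + by rewrite /= inE andbT eq_sym (ch_neq Hc).
  + move=> z Hz Hzc; have -> : z = r.
      by move: Hz Hzc; rewrite !inE => /orP[/eqP->|/eqP->] //; rewrite eqxx.
    by rewrite Hrc HrA.
- set S' := S :\: R.
  have HS'r : r \in S' by rewrite inE HrR Hr.
  have h2 : #|S| = (#|S'| + #|R|)%N.
    by rewrite cardsD (setIidPr HRS) subnK // subset_leq_card.
  have Hr0 : (0 < #|R|)%N by rewrite card_gt0.
  have Hlt : (#|S'| < #|S|)%N by lia.
  have HS'n : (#|S'| <= n)%N by lia.
  have [D' [HD'S HD'c HD'W]] := IH S' HS'n HSR HS'r.
  exists (D' :|: X); split.
  + rewrite subUset (subset_trans HXR HRS) andbT.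
    by apply: subset_trans HD'S _; apply: subsetDl.
  + have h1 := leq_card_setU D' X.
    apply: (leq_trans (leq_mul (leqnn 3) h1)); rewrite mulnDr h2.
    apply: (leq_trans (leq_add HD'c HXc)); by rewrite addnAC.
  move=> u Hu; case HuR: (u \in R); first exact: HW D' HD'S HD'W u HuR.
  have HuS' : u \in S' by rewrite inE HuR Hu.
  apply: le_trans (HD'W u HuS') _.
  exact: mono (subsetDl S R) HD'S (disj_SR S HXR) HuS'.
Qed.

End Rooted.


Lemma exists_leaf (T : finType) (e : rel T) (Hsym : symmetric e)
  (Hconn : forall x y : T, connect e x y)
  (Hcard : #|[set p : T * T | e p.1 p.2]| = (2 * (#|T| - 1))%N) (u0 : T) :
  exists r, (#|[set y | e r y]| <= 1)%N.
Proof.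
case: (@arg_maxnP T u0 xpredT (dist Hconn u0) isT) => v _ Hmax.
exists v.
have Hs : [set y | e v y] \subset [set par Hconn u0 v].
  apply/subsetP => y; rewrite !inE => Hy.
  case/orP: (tree_edge Hsym Hconn Hcard u0 Hy) => /andP[H1 /eqP H2] //.
  case: (par_spec Hconn Hcard H1) => _; rewrite -H2 => Hd.
  by have := Hmax y isT; lia.
by have := subset_leq_card Hs; rewrite cards1.
Qed.

Lemma upper_bound (T : finType) (e : rel T) (Hsym : symmetric e)
  (Hconn : forall x y : T, connect e x y)
  (Hcard : #|[set p : T * T | e p.1 p.2]| = (2 * (#|T| - 1))%N)
  (Hsub : subcubic e) (u0 : T) :
  exists D, exp_dominating e D && (3 * #|D| <= #|T| + 2)%N.
Proof.
case: (exists_leaf Hsym Hconn Hcard u0) => r Hleaf.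
have HS : anc_closed Hconn r [set: T] by move=> w _; rewrite inE.
have Hr : r \in [set: T] by rewrite inE.
case: (claim Hsym Hcard Hsub Hleaf (leqnn _) HS Hr) => D [_ Hc HW].
exists D; rewrite cardsT in Hc; rewrite Hc andbT.
have E : eS e [set: T] = e.
  apply: functional_extensionality => x; apply: functional_extensionality => y.
  by rewrite /eS !inE !andbT.
apply/forallP => u; have := HW u (in_setT u); by rewrite /W E.
Qed.

Lemma gamma_le (T : finType) (e : rel T) D : exp_dominating e D -> (gamma_e e <= #|D|)%N.
Proof.
move=> HD; rewrite /gamma_e.
have Hi : exp_dominating e [set: T].
  apply/forallP => u; apply: le_trans (weight_self e (in_setT u)); by rewrite ler1n.
by case: arg_minnP => // A _ /(_ D HD).
Qed.

Local Open Scope ring_scope.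

Theorem corollary1 (T : finType) (e : rel T)
    (Hsimple : simple_graph e) (Htree : is_tree e) (Hsub : subcubic e)
    (R : realFieldType) (x : T -> R) (Hx : porous_frac_feasible e x) :
  ((gamma_e e)%:R <= 2%:R * \sum_(u : T) x u)%R.
Proof.
case: Hsimple => Hsym _; case: Htree => Hn Hconn Hcard.
case/card_gt0P: Hn => u0 _.
have HL := lower_bound Hsym Hconn Hcard Hsub u0 Hx.
case: (upper_bound Hsym Hconn Hcard Hsub u0) => D /andP[HD Hc].
have Hg := gamma_le HD.
have H3 : (3 * gamma_e e <= #|T| + 2)%N by apply: leq_trans Hc; rewrite leq_mul2l Hg orbT.
have H3R : (3 * gamma_e e)%:R <= (#|T| + 2)%:R :> R by rewrite ler_nat.
rewrite natrM in H3R; lra.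
Qed.
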